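(* Let $A \in \mathbb{R}^{n\times d}$, $b\in\mathbb{R}^n$, and suppose $Ax=b$ admits a solution $x^*$ (not necessarily unique). Let $w$ be a random variable in $\mathbb{R}^n$, $\mathcal{N}(w) = \mathrm{span}\lbrace z \in \mathbb{R}^d : \mathbb{P}[z'A'w=0]=1\rbrace$, $\mathcal{R}(w) = \mathcal{N}(w)^\perp$. Let $\lbrace w_\ell : \ell \geq 0\rbrace$ be random variables in $\mathbb{R}^n$ with $\mathbb{P}[A'w_\ell \in \mathcal{R}(w)] = 1$ for all $\ell$. Let $x_0 \in \mathbb{R}^d$ be arbitrary and $$x_{k+1} = x_k + \frac{A'w_k w_k'(b - Ax_k)}{\|A'w_k\|_2^2}, \quad k \geq 0.$$ Define stopping times $\tau_0 = 0$, $\tau_1 = \min\lbrace k\geq 0 : \mathrm{span}\lbrace A'w_0,\ldots,A'w_k\rbrace = \mathcal{R}(w)\rbrace$, and for $\ell \geq 2$, $\tau_\ell = \min\lbrace k > \tau_{\ell-1} : \mathrm{span}\lbrace A'w_{\tau_{\ell-1}+1},\ldots,A'w_k\rbrace = \mathcal{R}(w)\rbrace$ if $\tau_{\ell-1}<\infty$, and $\tau_\ell = \infty$ otherwise. When the stopping times are finite, let $\mathcal{F}_\ell$ ($\ell\in\mathbb{N}$) be the set of matrices $F$ whose columns form a maximal linearly independent subset of $\lbrace A'w_{\tau_{\ell-1}+1}/\|A'w_{\tau_{\ell-1}+1}\|_2, \ldots, A'w_{\tau_\ell}/\|A'w_{\tau_\ell}\|_2\rbrace$, and $\gamma_\ell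 = 1 - \min_{F\in\mathcal{F}_\ell}\det(F'F)$. Then $\gamma_\ell \in [0,1)$ and, for any $\ell$, on the event $\lbrace\tau_\ell<\infty\rbrace$, $$\|x_{\tau_\ell+1} - x^* - P_{\mathcal{N}(w)}(x_0 - x^* )\|_2^2 \leq \Big(\prod_{j=1}^\ell \gamma_j\Big) \|P_{\mathcal{R}(w)}(x_0 - x^* )\|_2^2.$$ Therefore, for any $k$, $$\|x_k - x^* - P_{\mathcal{N}(w)}(x_0 - x^* )\|_2^2 \leq \Big(\prod_{j=1}^{L(k)} \gamma_j\Big)\|P_{\mathcal{R}(w)}(x_0 - x^* )\|_2^2,$$ where $L(k) = \max\lbrace \ell : k \geq \tau_\ell + 1\rbrace$, on the event $\lbrace \tau_{L(k)} < \infty\rbrace$.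
   Context: $P_W$ denotes the orthogonal projection onto a subspace $W$; $A'$ is the transpose. The iteration presupposes $A'w_k \neq 0$ so that it is defined. *)

(* Defs.v *)
From HB Require Import structures.
From mathcomp Require Import all_boot all_order all_algebra.
From mathcomp Require Import all_classical all_reals all_analysis.
Set Implicit Arguments.
Unset Strict Implicit.
Unset Printing Implicit Defensive.
Import Order.TTheory GRing.Theory Num.Theory.
Local Open Scope ring_scope.
Local Open Scope classical_set_scope.

Section RK.
Variable R : realType.

Definition dotv (m : nat) (u v : 'cV[R]_m) : R := (u^T *m v) 0 0.
Definition norm2 (m : nat) (v : 'cV[R]_m) : R := Num.sqrt (dotv v v).

Definition spanS (m : nat) (S : set 'cV[R]_m) : set 'cV[R]_m :=
  [set v | exists (k : nat) (c : 'I_k -> R) (u : 'I_k -> 'cV[R]_m),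
      (forall i, S (u i)) /\ v = \sum_(i < k) c i *: u i].

Definition orthS (m : nat) (S : set 'cV[R]_m) : set 'cV[R]_m :=
  [set v | forall u, S u -> dotv u v = 0].

Definition projS (m : nat) (W : set 'cV[R]_m) (v : 'cV[R]_m) : 'cV[R]_m :=
  xget 0 [set p | W p /\ forall u, W u -> dotv u (v - p) = 0].

Definition first_time (p : nat -> Prop) : option nat :=
  if pselect (exists k, p k)
  then Some (xget 0%N [set k | p k /\ forall j, p j -> (k <= j)%N])
  else None.

Variables (dT : measure_display) (T : measurableType dT) (P : probability T R).
Variables (n d : nat) (A : 'M[R]_(n, d)) (b : 'cV[R]_n).

Definition Nspace (w : T -> 'cV[R]_n) : set 'cV[R]_d :=
  spanS [set z | P [set t | dotv z (A^T *m w t) = 0] = 1%E].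
Definition Rspace (w : T -> 'cV[R]_n) : set 'cV[R]_d := orthS (Nspace w).

Variables (w : T -> 'cV[R]_n) (ws : nat -> T -> 'cV[R]_n) (x0 : 'cV[R]_d).

Fixpoint xiter (t : T) (k : nat) : 'cV[R]_d :=
  match k with
  | 0 => x0
  | k'.+1 =>
      let xk := xiter t k' in
      let a := A^T *m ws k' t in
      xk + (norm2 a ^+ 2)^-1 *: (a *m ((ws k' t)^T *m (b - A *m xk)))
  end.

Definition segspan (t : T) (lo k : nat) : set 'cV[R]_d :=
  spanS [set v | exists j, (lo <= j <= k)%N /\ v = A^T *m ws j t].

(* stopping times; None encodes infinity *)
Fixpoint tau (t : T) (l : nat) : option nat :=
  match l with
  | 0 => Some 0%N
  | l'.+1 =>
      match tau t l' with
      | None => None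
      | Some s =>
          let lo := if l' is 0 then 0%N else s.+1 in
          first_time (fun k => (lo <= k)%N /\ segspan t lo k = Rspace w)
      end
  end.

Definition bstart (t : T) (l : nat) : nat :=
  match l with
  | 0 | 1 => 0%N
  | l'.+1 => if tau t l' is Some s then s.+1 else 0%N
  end.

Definition blockvecs (t : T) (l : nat) : set 'cV[R]_d :=
  [set v | exists j, (bstart t l <= j)%N /\
      (if tau t l is Some e then (j <= e)%N else False) /\
      v = (norm2 (A^T *m ws j t))^-1 *: (A^T *m ws j t)].

Definition Fmats (V : set 'cV[R]_d) : set {m : nat & 'M[R]_(d, m)} :=
  [set F | let M := projT2 F in
     (forall i j, col i M = col j M -> i = j) /\
     (forall i, V (col i M)) /\
     \rank M = projT1 F /\
     (forall v, V v -> (forall i, col i M != v) ->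
        (\rank (row_mx M v) < (projT1 F).+1)%N)].

Definition gamma (t : T) (l : nat) : R :=
  1 - inf [set \det ((projT2 F)^T *m projT2 F) | F in Fmats (blockvecs t l)].

Definition isL (t : T) (k l : nat) : Prop :=
  (exists s, tau t l = Some s /\ (s.+1 <= k)%N) /\
  (forall l' s', tau t l' = Some s' -> (s'.+1 <= k)%N -> (l' <= l)%N).

End RK.

(* Main.v *)
Require Import Defs.
From HB Require Import structures.
From mathcomp Require Import all_boot all_order all_algebra.
From mathcomp Require Import all_classical all_reals all_analysis.
From mathcomp Require Import ring lra.
Import Order.TTheory GRing.Theory Num.Theory.
Local Open Scope ring_scope.
Local Open Scope classical_set_scope.
Set Implicit Arguments. Unset Strict Implicit. Unset Printing Implicit Defensive.
Section Dot.
Variable R : realType.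
Implicit Types (m : nat).

Lemma dotvE m (u v : 'cV[R]_m) : dotv u v = \sum_i u i 0 * v i 0.
Proof. by rewrite /dotv !mxE; apply: eq_bigr => i _; rewrite !mxE. Qed.

Lemma dotvC m (u v : 'cV[R]_m) : dotv u v = dotv v u.
Proof. by rewrite !dotvE; apply: eq_bigr => i _; rewrite mulrC. Qed.

Lemma dotvDl m (u v z : 'cV[R]_m) : dotv (u + v) z = dotv u z + dotv v z.
Proof. by rewrite !dotvE -big_split; apply: eq_bigr => i _; rewrite !mxE mulrDl. Qed.

Lemma dotvDr m (u v z : 'cV[R]_m) : dotv z (u + v) = dotv z u + dotv z v.
Proof. by rewrite dotvC dotvDl !(dotvC z). Qed.

Lemma dotvZl m a (u z : 'cV[R]_m) : dotv (a *: u) z = a * dotv u z.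
Proof. by rewrite !dotvE mulr_sumr; apply: eq_bigr => i _; rewrite !mxE mulrA. Qed.

Lemma dotvZr m a (u z : 'cV[R]_m) : dotv z (a *: u) = a * dotv z u.
Proof. by rewrite dotvC dotvZl dotvC. Qed.

Lemma dotvNl m (u z : 'cV[R]_m) : dotv (- u) z = - dotv u z.
Proof. by rewrite -scaleN1r dotvZl mulN1r. Qed.

Lemma dotvNr m (u z : 'cV[R]_m) : dotv z (- u) = - dotv z u.
Proof. by rewrite dotvC dotvNl dotvC. Qed.

Lemma dotvBl m (u v z : 'cV[R]_m) : dotv (u - v) z = dotv u z - dotv v z.
Proof. by rewrite dotvDl dotvNl. Qed.

Lemma dotvBr m (u v z : 'cV[R]_m) : dotv z (u - v) = dotv z u - dotv z v.
Proof. by rewrite dotvDr dotvNr. Qed.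

Lemma dotv0l m (z : 'cV[R]_m) : dotv 0 z = 0.
Proof. by rewrite dotvE big1 // => i _; rewrite mxE mul0r. Qed.

Lemma dotv0r m (z : 'cV[R]_m) : dotv z 0 = 0.
Proof. by rewrite dotvC dotv0l. Qed.

Lemma dotv_ge0 m (v : 'cV[R]_m) : 0 <= dotv v v.
Proof. by rewrite dotvE sumr_ge0 // => i _; rewrite -expr2 sqr_ge0. Qed.

Lemma dotv_eq0 m (v : 'cV[R]_m) : dotv v v = 0 -> v = 0.
Proof.
rewrite dotvE => /eqP; rewrite psumr_eq0; last by move=> i _; rewrite -expr2 sqr_ge0.
move=> /allP H; apply/matrixP => i j; rewrite (ord1 j) mxE.
by have /(_ (mem_index_enum i)) := H i; rewrite -expr2 sqrf_eq0 => /eqP.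
Qed.

Lemma norm2_sq m (v : 'cV[R]_m) : norm2 v ^+ 2 = dotv v v.
Proof. by rewrite /norm2 sqr_sqrtr // dotv_ge0. Qed.

Lemma dotv_mull m k (M : 'M[R]_(m, k)) (c : 'cV[R]_k) (v : 'cV[R]_m) :
  dotv (M *m c) v = dotv c (M^T *m v).
Proof. by rewrite /dotv trmx_mul mulmxA. Qed.

Lemma dotv_mulr m k (M : 'M[R]_(m, k)) (c : 'cV[R]_k) (v : 'cV[R]_m) :
  dotv v (M *m c) = dotv (M^T *m v) c.
Proof. by rewrite dotvC dotv_mull dotvC. Qed.

Lemma CS m (u v : 'cV[R]_m) : dotv u v ^+ 2 <= dotv u u * dotv v v.
Proof.
have [u0|] := eqVneq (dotv u u) 0.
  by rewrite (dotv_eq0 u0) dotv0l dotv0l expr0n /= mul0r.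
move=> nz; have pos : 0 < dotv u u by rewrite lt_def nz dotv_ge0.
have := dotv_ge0 (dotv u u *: v - dotv u v *: u).
rewrite !(dotvBl, dotvBr, dotvZl, dotvZr) (dotvC v u) => H.
have : 0 <= dotv u u * (dotv u u * dotv v v - dotv u v ^+ 2).
  by move: H; congr (_ <= _); ring.
by rewrite pmulr_rge0 // subr_ge0.
Qed.

End Dot.
Section Proj.
Variable R : realType.

Lemma dotv_sumr d I (r : seq I) (P : pred I) (f : I -> 'cV[R]_d) x :
  dotv x (\sum_(i <- r | P i) f i) = \sum_(i <- r | P i) dotv x (f i).
Proof. exact: (big_morph (dotv x) (fun u v => dotvDr u v x) (dotv0r x)). Qed.

Lemma dotv_suml d I (r : seq I) (P : pred I) (f : I -> 'cV[R]_d) x :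
  dotv (\sum_(i <- r | P i) f i) x = \sum_(i <- r | P i) dotv (f i) x.
Proof. rewrite dotvC dotv_sumr; apply: eq_bigr => i _; exact: dotvC. Qed.

Lemma proj_fun d m (u : 'I_m -> 'cV[R]_d) (v : 'cV[R]_d) :
  exists c : 'I_m -> R, forall i, dotv (u i) (v - \sum_j c j *: u j) = 0.
Proof.
elim: m u v => [|m IH] u v.
  by exists (fun _ => 0) => -[].
pose u1 := fun j : 'I_m => u (lift ord0 j).
have [c1 H1] := IH u1 v.
have [c2 H2] := IH u1 (u ord0).
set q := u ord0 - \sum_j c2 j *: u1 j.
set r1 := v - \sum_j c1 j *: u1 j.
have [q0|qn0] := eqVneq (dotv q q) 0.
  have {}q0 := dotv_eq0 q0.
  exists (fun i => if unlift ord0 i is Some j then c1 j else 0) => i.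
  rewrite big_ord_recl /= unlift_none scale0r add0r.
  under eq_bigr => j _ do rewrite liftK.
  rewrite -/r1; case: (unliftP ord0 i) => [j ->|->]; first exact: H1.
  have -> : u ord0 = \sum_j c2 j *: u1 j by apply/eqP; rewrite -subr_eq0 -/q q0.
  by rewrite dotv_suml big1 // => j _; rewrite dotvZl H1 mulr0.
pose be := dotv q r1 / dotv q q.
exists (fun i => if unlift ord0 i is Some j then c1 j - be * c2 j else be) => i.
rewrite big_ord_recl /= unlift_none.
under eq_bigr => j _ do rewrite liftK.
have -> : v - (be *: u ord0 + \sum_(i < m) (c1 i - be * c2 i) *: u (lift ord0 i))
   = r1 - be *: q.
  rewrite /r1 /q scalerBr -/u1.
  have -> : \sum_(i < m) (c1 i - be * c2 i) *: u1 i =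
     \sum_(i < m) c1 i *: u1 i - be *: \sum_j c2 j *: u1 j.
    rewrite scaler_sumr -sumrB; apply: eq_bigr => j _.
    by rewrite scalerBl scalerA.
  rewrite !opprD !opprK !addrA; congr (_ + _); by rewrite addrAC.
have Hq : forall j, dotv (u1 j) q = 0 by move=> j; exact: H2.
case: (unliftP ord0 i) => [j ->|->].
  by rewrite dotvBr dotvZr -/(u1 j) Hq H1 mulr0 subr0.
have -> : u ord0 = q + \sum_j c2 j *: u1 j by rewrite /q subrK.
rewrite dotvDl dotv_suml big1; last first.
  by move=> j _; rewrite dotvZl dotvBr dotvZr H1 Hq mulr0 subr0 mulr0.
rewrite addr0 dotvBr dotvZr /be -mulrA mulVf // mulr1 subrr //.
Qed.

Lemma mulmx_sum_col d m (F : 'M[R]_(d, m)) (c : 'cV[R]_m) :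
  F *m c = \sum_i c i 0 *: col i F.
Proof.
apply/matrixP => i j; rewrite !mxE summxE; apply: eq_bigr => k _.
by rewrite !mxE (ord1 j) mulrC.
Qed.

Lemma trmx_mul_colE d m (F : 'M[R]_(d, m)) (x : 'cV[R]_d) i :
  (F^T *m x) i 0 = dotv (col i F) x.
Proof. by rewrite dotvE mxE; apply: eq_bigr => j _; rewrite !mxE. Qed.

Lemma proj_mx d m (F : 'M[R]_(d, m)) (v : 'cV[R]_d) :
  exists c : 'cV[R]_m, F^T *m (v - F *m c) = 0.
Proof.
have [c Hc] := proj_fun (fun i => col i F) v.
exists (\col_i c i); apply/matrixP => i j; rewrite (ord1 j) trmx_mul_colE mxE.
by rewrite mulmx_sum_col -(Hc i); congr (dotv _ (_ - _)); apply: eq_bigr => k _; rewrite mxE.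
Qed.

End Proj.
Section Gram.
Variable R : realType.

Lemma gram_schur d m (F1 : 'M[R]_(d, m)) (u : 'cV[R]_d) (c : 'cV[R]_m) :
  F1^T *m (u - F1 *m c) = 0 ->
  \det ((row_mx u F1)^T *m row_mx u F1) =
  dotv (u - F1 *m c) (u - F1 *m c) * \det (F1^T *m F1).
Proof.
move=> Hc; set q := u - F1 *m c.
pose U : 'M[R]_(1 + m) := block_mx 1%:M 0 (- c) 1%:M.
have dU : \det U = 1 by rewrite det_lblock !det1 mulr1.
have FU : row_mx u F1 *m U = row_mx q F1.
  rewrite mul_row_block !mulmx1 !mulmx0 ?addr0 ?add0r mulmxN.
  by rewrite /q.
have -> : \det ((row_mx u F1)^T *m row_mx u F1) =
          \det ((row_mx q F1)^T *m row_mx q F1).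
  rewrite -FU trmx_mul mulmxA -(mulmxA U^T) !det_mulmx det_tr dU; ring.
rewrite tr_row_mx mul_col_row Hc.
have -> : q^T *m F1 = 0 by rewrite -[q^T *m F1]trmxK trmx_mul trmxK Hc trmx0.
by rewrite det_ublock det_mx11.
Qed.

Lemma rank_row_mx_le d m (u : 'cV[R]_d) (F1 : 'M[R]_(d, m)) :
  (\rank (row_mx u F1) <= 1 + \rank F1)%N.
Proof.
rewrite -mxrank_tr tr_row_mx -addsmxE.
apply: leq_trans (mxrank_adds_leqif _ _) _.
by apply: leq_add; [exact: rank_leq_row | rewrite mxrank_tr].
Qed.

Lemma rank_mul_le d m k (F1 : 'M[R]_(d, m)) (B : 'M[R]_(m, k)) :
  (\rank (F1 *m B) <= \rank F1)%N.
Proof. exact: mxrankM_maxl. Qed.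

Lemma gram_prop d m (F : 'M[R]_(d, m)) :
  [/\ 0 <= \det (F^T *m F),
      \rank F = m -> 0 < \det (F^T *m F) &
      (forall i, dotv (col i F) (col i F) = 1) -> \det (F^T *m F) <= 1].
Proof.
elim: m F => [|m IH] F.
  by rewrite det_mx00; split => //; rewrite ltr01.
have -> : F = row_mx (lsubmx (F : 'M[R]_(d, 1 + m))) (rsubmx (F : 'M[R]_(d, 1 + m))).
  by rewrite hsubmxK.
set u := lsubmx _; set F1 := rsubmx _.
have [c Hc] := proj_mx F1 u.
rewrite (gram_schur Hc).
have [IH1 IH2 IH3] := IH F1.
set q := u - F1 *m c.
split.
- by rewrite mulr_ge0 // dotv_ge0.
- move=> rk.
  have rk1 : \rank F1 = m.
    apply/eqP; rewrite eqn_leq rank_leq_col /=.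
    by have := rank_row_mx_le u F1; rewrite rk.
  rewrite mulr_gt0 ?IH2 // lt_def dotv_ge0 andbT.
  apply/eqP => /dotv_eq0 q0.
  have : row_mx u F1 = F1 *m row_mx c 1%:M.
    by rewrite mul_mx_row mulmx1; congr row_mx; apply/eqP; rewrite -subr_eq0 -/q q0.
  move=> /(congr1 mxrank); rewrite rk => E.
  by have := rank_mul_le F1 (row_mx c 1%:M); rewrite -E rk1 ltnn.
- move=> Hu.
  have Hu1 : forall i, dotv (col i F1) (col i F1) = 1.
    move=> i; have E : col (rshift 1 i) (row_mx u F1) = col i F1 := colKr i u F1.
    by rewrite -E; exact: Hu.
  have uu : dotv u u = 1.
    have E : col (lshift m (@ord0 0)) (row_mx u F1) = u.
      by rewrite colKl; apply/matrixP => i j; rewrite (ord1 j) !mxE.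
    by rewrite -{1 2}E; exact: Hu.
  have qle : dotv q q <= 1.
    have Hq : F1^T *m q = 0 := Hc.
    have ueq : u = q + F1 *m c by rewrite /q subrK.
    clearbody q; move: uu; rewrite ueq !(dotvDl, dotvDr) (dotvC (F1 *m c) q) dotv_mulr Hq dotv0l => <-.
    by rewrite addr0 add0r lerDl dotv_ge0.
  have := IH3 Hu1; move: IH1 (dotv_ge0 q) qle => a b c1 d1.
  by rewrite -[1]mulr1 ler_pM.
Qed.

End Gram.
Lemma meany_ineq (R : realType) (Z U al la s c : R) :
  0 <= c -> c <= 1 -> 0 < s -> s <= 1 -> 0 <= Z -> 0 <= U -> Z <= c * U ->
  al ^+ 2 <= (1 - s) * Z ->
  Z + la ^+ 2 * s - (al + la * s) ^+ 2 <= (1 - s * (1 - c)) * (U + la ^+ 2 * s).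
Proof.
move=> c0 c1 s0 s1 Z0 U0 ZU aZ.
rewrite -subr_ge0.
have E : (1 - s * (1 - c)) * (U + la ^+ 2 * s) - (Z + la ^+ 2 * s - (al + la * s) ^+ 2)
   = U * (1 - s * (1 - c)) - Z + al ^+ 2 + 2 * al * s * la + c * s ^+ 2 * la ^+ 2.
  by ring.
rewrite E.
have [c00|cpos] := eqVneq c 0.
  have Z00 : Z = 0 by apply/eqP; rewrite eq_le Z0 andbT; move: ZU; rewrite c00 mul0r.
  have al0 : al = 0.
    by apply/eqP; rewrite -sqrf_eq0 eq_le sqr_ge0 andbT; move: aZ; rewrite Z00 mulr0.
  rewrite Z00 al0 c00 !(mul0r, mulr0, subr0, expr0n, addr0) mulr1 /=; nra.
have cp : 0 < c by rewrite lt_def cpos c0.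
rewrite -(pmulr_rge0 _ cp).
have h1 : 0 <= 1 - s * (1 - c) by nra.
have h2 : Z * (1 - s * (1 - c)) <= c * U * (1 - s * (1 - c)) by rewrite ler_wpM2r.
have h3 : (al + c * s * la) ^+ 2 <=
   c * (U * (1 - s * (1 - c)) - Z + al ^+ 2 + 2 * al * s * la + c * s ^+ 2 * la ^+ 2).
  have -> : c * (U * (1 - s * (1 - c)) - Z + al ^+ 2 + 2 * al * s * la + c * s ^+ 2 * la ^+ 2)
     = (al + c * s * la) ^+ 2 + ((c * U * (1 - s * (1 - c)) - Z * (1 - s * (1 - c)))
       + ((1 - s) * Z - al ^+ 2) * (1 - c)) by ring.
  by rewrite lerDl addr_ge0 // ?subr_ge0 // mulr_ge0 // subr_ge0.
apply: le_trans h3; exact: sqr_ge0.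
Qed.
Section Meany.
Variable R : realType.
Variable d : nat.
Variable u : nat -> 'cV[R]_d.
Hypothesis unit : forall j, dotv (u j) (u j) = 1.
Variable lo : nat.

Definition Qu (a x : 'cV[R]_d) := x - dotv a x *: a.

Fixpoint qrun (k : nat) (x : 'cV[R]_d) : 'cV[R]_d :=
  if k is k'.+1 then Qu (u (lo + k')) (qrun k' x) else x.

Lemma Qu_contr a x : dotv a a = 1 -> dotv (Qu a x) (Qu a x) = dotv x x - dotv a x ^+ 2.
Proof.
move=> aa; rewrite /Qu !(dotvBl, dotvBr, dotvZl, dotvZr) aa (dotvC x a); ring.
Qed.

Lemma qrun_orth k y v : (forall j, (j < k)%N -> dotv (u (lo + j)) v = 0) ->
  qrun k (y + v) = qrun k y + v.
Proof.
elim: k => [//|k IH] H /=; rewrite IH; last by move=> j jk; apply: H; exact: ltnW.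
rewrite /Qu dotvDr H // addr0 -!addrA; congr (_ + _); exact: addrC.
Qed.

Lemma qrun_col k m (F : 'M[R]_(d, m)) c :
  (forall j, (j < k)%N -> exists e, u (lo + j) = F *m e) ->
  exists e, qrun k (F *m c) = F *m e.
Proof.
elim: k => [|k IH] H /=; first by exists c.
have [e He] := IH (fun j jk => H j (ltnW jk)).
have [e' He'] := H k (ltnSn k).
exists (e - dotv (u (lo + k)) (F *m e) *: e').
by rewrite He /Qu mulmxBr -scalemxAr -He'.
Qed.

Lemma mul0c (F : 'M[R]_(d, 0)) (c : 'cV[R]_0) : F *m c = 0.
Proof. by apply/matrixP => i j; rewrite !mxE big_ord0. Qed.

Lemma meany k : exists m (F : 'M[R]_(d, m)),
  [/\ forall i, exists j, (lo <= j < lo + k)%N /\ col i F = u j,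
      0 < \det (F^T *m F),
      forall j, (lo <= j < lo + k)%N -> exists c, u j = F *m c &
      forall c, dotv (qrun k (F *m c)) (qrun k (F *m c))
                <= (1 - \det (F^T *m F)) * dotv (F *m c) (F *m c)].
Proof.
elim: k => [|k [m [F [Hcol Hdet Hmem Hcontr]]]].
  exists 0%N, 0; split.
  - by case.
  - by rewrite det_mx00 ltr01.
  - by move=> j; rewrite addn0 => /andP [a b]; move: b; rewrite ltnNge a.
  - by move=> c /=; rewrite mul0c dotv0l mulr0.
have Dle : \det (F^T *m F) <= 1.
  have [_ _ P3] := gram_prop F; apply: P3 => i.
  by have [j [_ ->]] := Hcol i; exact: unit.
set a := u (lo + k).
have aunit : dotv a a = 1 := unit _.
have [[c0 ac0]|nin] := pselect (exists c, a = F *m c).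
  exists m, F; split => //.
  - move=> i; have [j [jr ->]] := Hcol i; exists j; split => //.
    by move: jr => /andP [-> /=]; rewrite addnS => /ltnW.
  - move=> j /andP [j1]; rewrite addnS ltnS leq_eqVlt => /orP [/eqP ->|j2].
      by exists c0.
    by apply: Hmem; rewrite j1.
  - move=> c /=; rewrite Qu_contr //.
    apply: le_trans (Hcontr c); rewrite lerBlDr lerDl; exact: sqr_ge0.
have [c0 Hc0] := proj_mx F a.
set p := a - F *m c0.
have Hp : F^T *m p = 0 := Hc0.
have pF : forall e, dotv (F *m e) p = 0 by move=> e; rewrite dotv_mull Hp dotv0r.
have pF' : forall e, dotv p (F *m e) = 0 by move=> e; rewrite dotvC pF.
have pn0 : dotv p p != 0.
  apply/eqP => /dotv_eq0 p0; apply: nin; exists c0.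
  by apply/eqP; rewrite -subr_eq0 -/p p0.
have sp : 0 < dotv p p by rewrite lt_def pn0 dotv_ge0.
have aeq : a = p + F *m c0 by rewrite /p subrK.
clearbody p.
have Fc0 : dotv (F *m c0) (F *m c0) = 1 - dotv p p.
  move: aunit; rewrite aeq !(dotvDl, dotvDr) pF pF' addr0 add0r => <-.
  by rewrite addrC addKr.
have sle : dotv p p <= 1 by rewrite -subr_ge0 -Fc0 dotv_ge0.
exists (1 + m)%N, (row_mx a F).
have schur : \det ((row_mx a F)^T *m row_mx a F) = dotv p p * \det (F^T *m F).
  have Hc0' : F^T *m (a - F *m c0) = 0 by rewrite aeq addrK.
  by rewrite (gram_schur Hc0') aeq addrK.
split.
- move=> i; case: (splitP i) => j ij.
  + exists (lo + k)%N; split; first by rewrite leq_addr /= addnS ltnS leqnn.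
    have -> : i = lshift m j by apply: val_inj; rewrite /= ij.
    rewrite colKl (ord1 j); apply/matrixP => r s; rewrite (ord1 s) !mxE.
    by rewrite /a.
  + have -> : i = rshift 1 j by apply: val_inj; rewrite /= ij.
    rewrite colKr; have [j' [jr ->]] := Hcol j; exists j'; split => //.
    by move: jr => /andP [-> /=]; rewrite addnS => /ltnW.
- by rewrite schur mulr_gt0.
- move=> j /andP [j1]; rewrite addnS ltnS leq_eqVlt => /orP [/eqP ->|j2].
    exists (col_mx 1%:M 0); by rewrite mul_row_col mulmx0 addr0 mulmx1.
  have [e ->] : exists c, u j = F *m c by apply: Hmem; rewrite j1 j2.
  exists (col_mx 0 e); by rewrite mul_row_col mulmx0 add0r.
- move=> cc; rewrite schur.
  set la := cc ord0 0.
  have xeq : row_mx a F *m cc = la *: p + F *m (la *: c0 + dsubmx (cc : 'cV[R]_(1 + m))).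
    rewrite -[cc in LHS](@vsubmxK _ 1 m) mul_row_col.
    have -> : a *m usubmx (cc : 'cV[R]_(1 + m)) = la *: a.
      rewrite [usubmx _]mx11_scalar mul_mx_scalar; congr (_ *: _).
      by rewrite mxE /la; congr (cc _ _); apply: val_inj.
    by rewrite aeq scalerDr mulmxDr -scalemxAr addrA.
  rewrite xeq; set z0 := F *m _.
  have orthp : forall j, (j < k)%N -> dotv (u (lo + j)) (la *: p) = 0.
    move=> j jk; have [e ->] : exists c, u (lo + j) = F *m c.
      by apply: Hmem; rewrite leq_addr /= ltn_add2l.
    by rewrite dotvZr pF mulr0.
  have memk : forall j, (j < k)%N -> exists e, u (lo + j) = F *m e.
    by move=> j jk; apply: Hmem; rewrite leq_addr /= ltn_add2l.
  rewrite /= (addrC (la *: p)) qrun_orth //.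
  have [e ze] := qrun_col (la *: c0 + dsubmx (cc : 'cV[R]_(1 + m))) memk.
  have IH := Hcontr (la *: c0 + dsubmx (cc : 'cV[R]_(1 + m))).
  rewrite -/z0 in ze IH; rewrite ze in IH *.
  rewrite Qu_contr // -/a.
  have E1 : dotv (F *m e + la *: p) (F *m e + la *: p) = dotv (F *m e) (F *m e) + la ^+ 2 * dotv p p.
    rewrite !(dotvDl, dotvDr, dotvZl, dotvZr) !pF !pF'; ring.
  have E2 : dotv (z0 + la *: p) (z0 + la *: p) = dotv z0 z0 + la ^+ 2 * dotv p p.
    rewrite /z0 !(dotvDl, dotvDr, dotvZl, dotvZr) !pF !pF'; ring.
  have E3 : dotv a (F *m e + la *: p) = dotv (F *m c0) (F *m e) + la * dotv p p.
    rewrite aeq !(dotvDl, dotvDr, dotvZl, dotvZr) !pF !pF'; ring.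
  rewrite E1 E2 E3.
  have -> : dotv p p * \det (F^T *m F) = dotv p p * (1 - (1 - \det (F^T *m F))) by ring.
  apply: meany_ineq => //.
  - by rewrite subr_ge0.
  - by rewrite lerBlDr lerDl ltW.
  - exact: dotv_ge0.
  - exact: dotv_ge0.
  - by have := CS (F *m c0) (F *m e); rewrite Fc0.
Qed.

End Meany.
Section Span.
Variable R : realType.
Variable d : nat.

Lemma colspace_sum m (F : 'M[R]_(d, m)) k (f : 'I_k -> 'cV[R]_d) :
  (forall i, exists e, f i = F *m e) -> exists e, \sum_(i < k) f i = F *m e.
Proof.
elim: k f => [|k IH] f H; first by exists 0; rewrite big_ord0 mulmx0.
have [e He] := IH (fun i => f (widen_ord (leqnSn k) i)) (fun i => H _).
have [e' He'] := H ord_max.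
by exists (e + e'); rewrite big_ord_recr /= He He' mulmxDr.
Qed.

Lemma col_row_mx_split m (s : 'cV[R]_d) (F : 'M[R]_(d, m)) (P : 'cV[R]_d -> Prop) :
  P s -> (forall i, P (col i F)) -> forall i, P (col i (row_mx s F : 'M[R]_(d, 1 + m))).
Proof.
move=> Ps PF i; case: (splitP i) => j ij.
  have -> : i = lshift m j by apply: val_inj; rewrite /= ij.
  rewrite colKl (ord1 j); suff -> : col ord0 s = s by [].
  by apply/matrixP => r c; rewrite (ord1 c) !mxE.
have -> : i = rshift 1 j by apply: val_inj; rewrite /= ij.
by rewrite colKr.
Qed.

Lemma maxrank (S : set 'cV[R]_d) : exists m (F : 'M[R]_(d, m)),
  (forall i, S (col i F)) /\ forall s, S s -> exists c, s = F *m c.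
Proof.
pose K r := exists m (F : 'M[R]_(d, m)), (forall i, S (col i F)) /\ \rank F = r.
pose P := fun r => `[< K r >].
have exP : exists r, P r.
  exists 0%N; apply/asboolP; exists 0%N, 0; split; first by case.
  by apply/eqP; rewrite -leqn0 rank_leq_col.
have ubP : forall r, P r -> (r <= d)%N.
  by move=> r /asboolP [m [F [_ <-]]]; exact: rank_leq_row.
case: (ex_maxnP exP ubP) => r /asboolP [m [F [HS rk]]] Hmax.
exists m, F; split => // s Ss.
pose G : 'M[R]_(d, 1 + m) := row_mx s F.
have KG : P (\rank G).
  apply/asboolP; exists (1 + m)%N, G; split => //.
  exact: col_row_mx_split.
have le1 := Hmax _ KG.
have AB : (F^T <= col_mx s^T F^T)%MS by rewrite -addsmxE addsmxSr.
have H := mxrank_leqif_sup AB.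
have rkB : \rank (col_mx s^T F^T) = \rank G by rewrite -tr_row_mx mxrank_tr.
have BA : (col_mx s^T F^T <= F^T)%MS.
  by rewrite -H.2 eqn_leq H.1 /= rkB mxrank_tr rk.
move: BA; rewrite -addsmxE addsmx_sub => /andP [/submxP [D HD] _].
by exists D^T; rewrite -[s]trmxK HD trmx_mul trmxK.
Qed.

Lemma spanS_proj (S : set 'cV[R]_d) v :
  exists p, spanS S p /\ forall z, spanS S z -> dotv z (v - p) = 0.
Proof.
have [m [F [HS HF]]] := maxrank S.
have [c Hc] := proj_mx F v.
exists (F *m c); split.
  exists m, (fun i => c i 0), (fun i => col i F); split => //.
  exact: mulmx_sum_col.
move=> z [k [c' [u' [Hu ->]]]].
rewrite dotv_suml big1 // => i _.
have [e ->] := HF _ (Hu i).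
by rewrite dotvZl dotv_mull Hc dotv0r mulr0.
Qed.

End Span.
Section GammaFacts.
Variable R : realType.
Variable d : nat.

Lemma Fmats_det_pos (V : set 'cV[R]_d) F : Fmats V F ->
  0 < \det ((projT2 F)^T *m projT2 F).
Proof. by case: F => m M [_ [_ [rk _]]]; have [_ P2 _] := gram_prop M; exact: P2. Qed.

Lemma Fmats_det_le1 (V : set 'cV[R]_d) F :
  (forall v, V v -> dotv v v = 1) -> Fmats V F ->
  \det ((projT2 F)^T *m projT2 F) <= 1.
Proof.
move=> HV; case: F => m M [_ [HM _]] /=; have [_ _ P3] := gram_prop M.
by apply: P3 => i; apply: HV; exact: HM.
Qed.

Definition Tg (u : nat -> 'cV[R]_d) e (m : nat) (g : {ffun 'I_m -> 'I_e.+1}) : R :=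
  let M := \matrix_(r < d, i < m) u (g i) r 0 in
  if 0 < \det (M^T *m M) then \det (M^T *m M) else 1.

Definition delta (u : nat -> 'cV[R]_d) e : R :=
  \big[Order.min/1]_(m < d.+1) \big[Order.min/1]_(g : {ffun 'I_m -> 'I_e.+1}) Tg u g.

Lemma delta_gt0 u e : 0 < delta u e.
Proof.
apply/bigmin_gtP; split => [|m _]; first exact: ltr01.
apply/bigmin_gtP; split => [|g _]; first exact: ltr01.
by rewrite /Tg /=; case: ifP => // _; exact: ltr01.
Qed.

Lemma delta_le (V : set 'cV[R]_d) (u : nat -> 'cV[R]_d) e F :
  (forall v, V v -> exists j, (j <= e)%N /\ v = u j) -> Fmats V F ->
  delta u e <= \det ((projT2 F)^T *m projT2 F).
Proof.
move=> HV FF; have pos := Fmats_det_pos FF.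
case: F FF pos => m M [_ [HM [rk _]]] /= pos; rewrite /= in rk.
have md : (m < d.+1)%N by rewrite ltnS -rk rank_leq_row.
apply/bigmin_leP; right; exists (Ordinal md) => //=.
have gex : forall i : 'I_m, exists j : 'I_e.+1, col i M = u j.
  move=> i; have [j [je ->]] := HV _ (HM i).
  by exists (Ordinal (je : (j < e.+1)%N)).
pose g := [ffun i => xget ord0 [set j : 'I_e.+1 | col i M = u j]].
apply/bigmin_leP; right; exists g => //; rewrite /Tg /=.
set Mg := \matrix_(r, i) _.
have -> : Mg = M.
  apply/matrixP => r i; rewrite mxE ffunE.
  have := xgetPex ord0 (gex i) => /= <-; by rewrite mxE.
by rewrite pos.
Qed.

Lemma gamma_bounds (V : set 'cV[R]_d) (u : nat -> 'cV[R]_d) e F0 :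
  (forall v, V v -> exists j, (j <= e)%N /\ v = u j) ->
  (forall v, V v -> dotv v v = 1) -> Fmats V F0 ->
  let G := 1 - inf [set \det ((projT2 F)^T *m projT2 F) | F in Fmats V] in
  [/\ 0 <= G, G < 1 & 1 - \det ((projT2 F0)^T *m projT2 F0) <= G].
Proof.
move=> HV Hu HF0 G.
set E := [set \det ((projT2 F)^T *m projT2 F) | F in Fmats V].
have lb : has_lbound E.
  exists 0 => x [F HF <-]; exact/ltW/(Fmats_det_pos HF).
have ne : E !=set0 by exists (\det ((projT2 F0)^T *m projT2 F0)), F0.
have i1 : inf E <= \det ((projT2 F0)^T *m projT2 F0).
  by apply: ge_inf => //; exists F0.
have i2 : delta u e <= inf E.
  apply: lb_le_inf => // x [F HF <-]; exact: delta_le HF.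
have := delta_gt0 u e; have := Fmats_det_le1 Hu HF0 => h1 h2.
rewrite /G; split.
- by rewrite subr_ge0; exact: le_trans i1 h1.
- by rewrite ltrBlDr ltrDl; exact: lt_le_trans i2.
- by rewrite lerB.
Qed.

End GammaFacts.
Lemma first_time_some (p : nat -> Prop) k : first_time p = Some k -> p k.
Proof.
rewrite /first_time; case: pselect => // -[k0 pk0] [<-].
pose Pb := fun k => `[< p k >].
have exP : exists k, Pb k by exists k0; apply/asboolP.
case: (ex_minnP exP) => m /asboolP pm Hm.
have : exists x, p x /\ forall j, p j -> (x <= j)%N.
  by exists m; split => // j pj; apply: Hm; apply/asboolP.
by move=> /(xgetPex 0%N) [].
Qed.

Section Main.
Variables (R : realType) (dT : measure_display) (T : measurableType dT)
  (P : probability T R) (n d : nat) (A : 'M[R]_(n, d)) (b : 'cV[R]_n)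
  (xstar : 'cV[R]_d) (w : T -> 'cV[R]_n) (ws : nat -> T -> 'cV[R]_n)
  (x0 : 'cV[R]_d) (t : T).
Hypothesis Hb : A *m xstar = b.
Hypothesis HRt : forall l, Rspace P A w (A^T *m ws l t).
Hypothesis Hnzt : forall l, A^T *m ws l t != 0.

Let N := Nspace P A w.
Let Rs := Rspace P A w.
Let a j := A^T *m ws j t.
Let u j := (norm2 (a j))^-1 *: a j.
Let pN := projS N (x0 - xstar).
Let r k := xiter A b ws x0 t k - xstar - pN.

Lemma pN_spec : N pN /\ forall z, N z -> dotv z ((x0 - xstar) - pN) = 0.
Proof.
have [p Hp] := spanS_proj [set z | P [set t | dotv z (A^T *m w t) = 0] = 1%E] (x0 - xstar).
have H : exists p, N p /\ forall z, N z -> dotv z ((x0 - xstar) - p) = 0 by exists p.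
exact: (xgetPex 0 H).
Qed.

Lemma Rs_orth z v : N z -> Rs v -> dotv z v = 0.
Proof. by move=> Nz Rv; apply: Rv. Qed.

Lemma Rs_lin (al be : R) v v' : Rs v -> Rs v' -> Rs (al *: v + be *: v').
Proof.
move=> Hv Hv' z Nz; rewrite dotvDr !dotvZr.
by rewrite (Rs_orth Nz Hv) (Rs_orth Nz Hv') !mulr0 addr0.
Qed.

Lemma subKv (x y : 'cV[R]_d) : x - (x - y) = y.
Proof. by rewrite opprB addrC subrK. Qed.

Lemma subBB (v y z : 'cV[R]_d) : y - z = (v - z) - (v - y).
Proof. by rewrite opprB [_ + (y - v)]addrC addrA subrK. Qed.

Lemma r0_proj : projS Rs (x0 - xstar) = r 0.
Proof.
have [NpN HpN] := pN_spec.
have Rr0 : Rs (r 0) by move=> z Nz; exact: HpN.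
apply: xget_unique.
  split => // z Rz; rewrite /r /= subKv.
  by rewrite dotvC; exact: Rs_orth.
move=> y [Ry Hy].
have Rd : Rs (y - r 0).
  by have := Rs_lin 1 (-1) Ry Rr0; rewrite scale1r scaleN1r.
have h1 := Hy _ Rd.
have h2 : dotv (y - r 0) ((x0 - xstar) - r 0) = 0.
  rewrite /r /= subKv dotvC; exact: Rs_orth.
have : dotv (y - r 0) (y - r 0) = 0.
  have e := subBB (x0 - xstar) y (r 0).
  by rewrite {2}e dotvBr h1 h2 subr0.
by move/dotv_eq0/eqP; rewrite subr_eq0 => /eqP.
Qed.

Lemma norm_a_neq0 j : norm2 (a j) != 0.
Proof.
apply/eqP => h; have : dotv (a j) (a j) = 0 by rewrite -norm2_sq h expr0n.
by move/dotv_eq0/eqP; rewrite (negbTE (Hnzt j)).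
Qed.

Lemma u_unit j : dotv (u j) (u j) = 1.
Proof.
rewrite /u dotvZl dotvZr -norm2_sq mulrA -expr2 exprVn mulVf //.
by rewrite expf_neq0 // norm_a_neq0.
Qed.

Lemma a_u j : a j = norm2 (a j) *: u j.
Proof. by rewrite /u scalerA mulfV ?scale1r // norm_a_neq0. Qed.

Lemma r_step k : r k.+1 = Qu (u k) (r k).
Proof.
have [NpN _] := pN_spec.
rewrite /r /= -/(a k) /Qu.
have -> : (ws k t)^T *m (b - A *m xiter A b ws x0 t k)
          = (a k)^T *m (xstar - xiter A b ws x0 t k).
  by rewrite -Hb -mulmxBr mulmxA /a trmx_mul trmxK.
rewrite [(a k)^T *m _]mx11_scalar mul_mx_scalar.
have -> : ((a k)^T *m (xstar - xiter A b ws x0 t k)) 0 0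
          = - dotv (a k) (xiter A b ws x0 t k - xstar - pN).
  rewrite -/(dotv _ _) -dotvNr !opprB.
  by rewrite [in RHS]dotvDr (dotvC _ pN) (Rs_orth NpN (HRt k)) add0r.
set rk := xiter A b ws x0 t k - xstar - pN.
have -> : xiter A b ws x0 t k + (norm2 (a k) ^+ 2)^-1 *: (- dotv (a k) rk *: a k) - xstar - pN
          = rk + (norm2 (a k) ^+ 2)^-1 *: (- dotv (a k) rk *: a k).
  by rewrite /rk -!addrA; congr (_ + _); rewrite addrC -!addrA; congr (_ + _); rewrite addrC.
rewrite /u dotvZl scalerA scalerA -scaleNr; congr (_ + _ *: _).
rewrite -exprVn expr2; ring.
Qed.


Lemma r_Rs k : Rs (r k).
Proof.
elim: k => [|k IH].
  by have [_ H] := pN_spec; move=> z Nz; exact: H.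
rewrite r_step /Qu.
have Ru : Rs (u k).
  by have := Rs_lin (norm2 (a k))^-1 0 (HRt k) (HRt k); rewrite scale0r addr0.
by have := Rs_lin 1 (- dotv (u k) (r k)) IH Ru; rewrite scale1r scaleNr.
Qed.

Lemma r_qrun lo k : r (lo + k) = qrun u lo k (r lo).
Proof. by elim: k => [|k IH]; rewrite ?addn0 // addnS r_step IH. Qed.

Lemma r_mono i j : (i <= j)%N -> dotv (r j) (r j) <= dotv (r i) (r i).
Proof.
move=> /subnK <-; elim: (j - i)%N => [|k IH]; first by rewrite add0n.
rewrite addSn r_step Qu_contr ?u_unit //; apply: le_trans IH.
by rewrite lerBlDr lerDl sqr_ge0.
Qed.

Lemma tau_succ l e : tau P A w ws t l.+1 = Some e ->
  exists s, tau P A w ws t l = Some s /\ (bstart P A w ws t l.+1 <= e)%N /\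
    segspan A ws t (bstart P A w ws t l.+1) e = Rspace P A w.
Proof.
rewrite /=; case E: (tau P A w ws t l) => [s|] // H.
exists s; split => //.
have := first_time_some H.
by case: l E H => [|l] E H //=; rewrite E.
Qed.

Lemma gramE m (F : 'M[R]_(d, m)) i k : (F^T *m F) i k = dotv (col i F) (col k F).
Proof. by rewrite dotvE mxE; apply: eq_bigr => j _; rewrite !mxE. Qed.

Lemma block l e : (0 < l)%N -> tau P A w ws t l = Some e ->
  [/\ 0 <= gamma P A w ws t l, gamma P A w ws t l < 1 &
      dotv (r e.+1) (r e.+1) <= gamma P A w ws t l *
         dotv (r (bstart P A w ws t l)) (r (bstart P A w ws t l))].
Proof.
case: l => // l _ He.
have [s [Hs [le_lo Hspan]]] := tau_succ He.
move: le_lo Hspan; set lo := bstart P A w ws t l.+1 => le_lo Hspan.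
have [m [F [Hcol Hdet Hmem Hcontr]]] := meany u_unit lo (e.+1 - lo).
have ek : (lo + (e.+1 - lo) = e.+1)%N by rewrite subnKC // ltnW.
rewrite ek in Hcol Hmem Hcontr.
have Hmem' : forall j, (lo <= j <= e)%N -> exists c, u j = F *m c.
  by move=> j /andP [j1 j2]; apply: Hmem; rewrite j1 ltnS.
have [cc rlo] : exists cc, r lo = F *m cc.
  have : Rspace P A w (r lo) := r_Rs lo.
  rewrite -Hspan => -[k' [c [v [Hv ->]]]].
  apply: colspace_sum => i.
  have [j [jr ->]] := Hv i.
  have [e' He'] := Hmem' j jr.
  exists (c i *: (norm2 (a j) *: e')).
  have E1 : a j = F *m (norm2 (a j) *: e') by rewrite -scalemxAr -He' -a_u.
  by rewrite -/(a j) [in LHS]E1 scalemxAr.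
have contr : dotv (r e.+1) (r e.+1) <=
             (1 - \det (F^T *m F)) * dotv (r lo) (r lo).
  by rewrite -ek r_qrun rlo; exact: Hcontr.
have Fm : Fmats (blockvecs P A w ws t l.+1) (existT _ m F).
  rewrite /Fmats /=; split; [|split; [|split]].
  - move=> i j Eij; apply/eqP; apply/negPn/negP => nij.
    have := determinant_alternate nij (A := F^T *m F).
    move=> /(_ _) H; have {}H : \det (F^T *m F) = 0.
      by apply: H => k; rewrite !gramE Eij.
    by move: Hdet; rewrite H ltxx.
  - move=> i; have [j [jr ->]] := Hcol i; exists j.
    move: jr => /andP [j1 j2]; rewrite He; split => //.
  - have uF : F^T *m F \in unitmx by rewrite unitmxE unitfE; apply/eqP => h; move: Hdet; rewrite h ltxx.
    apply/eqP; rewrite eqn_leq rank_leq_col /=.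
    by rewrite -{1}(mxrank_unit uF) mxrankM_maxr.
  - move=> v [j [j1 [j2 ->]]] _; rewrite He in j2.
    have [c Hc] : exists c, u j = F *m c by apply: Hmem'; rewrite j1 j2.
    have -> : (norm2 (A^T *m ws j t))^-1 *: (A^T *m ws j t) = F *m c by exact: Hc.
    have -> : row_mx F (F *m c) = F *m row_mx 1%:M c by rewrite mul_mx_row mulmx1.
    apply: leq_ltn_trans (mxrankM_maxl _ _) _.
    rewrite ltnS; exact: rank_leq_col.
have HV : forall v, blockvecs P A w ws t l.+1 v -> exists j, (j <= e)%N /\ v = u j.
  by move=> v [j [_ [j2 ->]]]; rewrite He in j2; exists j.
have Hu : forall v, blockvecs P A w ws t l.+1 v -> dotv v v = 1.
  by move=> v /HV [j [_ ->]]; exact: u_unit.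
have [G0 G1 G2] := gamma_bounds HV Hu Fm.
rewrite /gamma; split => //.
apply: le_trans contr _; apply: ler_wpM2r => //; exact: dotv_ge0.
Qed.


Lemma det_claims :
    (forall l e, (0 < l)%N -> tau P A w ws t l = Some e ->
        0 <= gamma P A w ws t l < 1) /\
    (forall l e, tau P A w ws t l = Some e ->
        norm2 (xiter A b ws x0 t e.+1 - xstar - projS (Nspace P A w) (x0 - xstar)) ^+ 2
        <= (\prod_(1 <= j < l.+1) gamma P A w ws t j)
           * norm2 (projS (Rspace P A w) (x0 - xstar)) ^+ 2) /\
    (forall k l, isL P A w ws t k l ->
        norm2 (xiter A b ws x0 t k - xstar - projS (Nspace P A w) (x0 - xstar)) ^+ 2
        <= (\prod_(1 <= j < l.+1) gamma P A w ws t j)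
           * norm2 (projS (Rspace P A w) (x0 - xstar)) ^+ 2).
Proof.
have key : forall l e, tau P A w ws t l = Some e ->
    dotv (r e.+1) (r e.+1) <= (\prod_(1 <= j < l.+1) gamma P A w ws t j) * dotv (r 0) (r 0).
  elim=> [|l IH] e He.
    case: He => <-; rewrite big_geq // mul1r; exact: r_mono.
  have [G0 G1 Hbl] := block (ltn0Sn l) He.
  have [s [Hs _]] := tau_succ He.
  case: l IH He Hs Hbl G0 G1 => [|l] IH He Hs Hbl G0 G1.
    by rewrite big_nat1.
  have bs : bstart P A w ws t l.+2 = s.+1.
    by change ((if tau P A w ws t l.+1 is Some s then s.+1 else 0%N) = s.+1); rewrite Hs.
  rewrite bs in Hbl; apply: le_trans Hbl _.
  rewrite big_nat_recr //= [X in _ <= X]mulrAC [X in _ <= X]mulrC.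
  by apply: ler_wpM2l => //; exact: IH.
have r0E : projS (Rspace P A w) (x0 - xstar) = r 0 := r0_proj.
split; last split.
- move=> l e l0 He; have [G0 G1 _] := block l0 He; by rewrite G0 G1.
- by move=> l e He; rewrite r0E !norm2_sq; exact: key.
- move=> k l [[s [Hs sk]] _]; rewrite r0E !norm2_sq.
  apply: le_trans (key _ _ Hs); exact: r_mono.
Qed.

End Main.

Unset Implicit Arguments.

Theorem mainTheorem10 (R : realType) (dT : measure_display) (T : measurableType dT)
  (P : probability T R) (n d : nat) (A : 'M[R]_(n, d)) (b : 'cV[R]_n)
  (xstar : 'cV[R]_d) (w : T -> 'cV[R]_n) (ws : nat -> T -> 'cV[R]_n)
  (x0 : 'cV[R]_d) :
  A *m xstar = b ->
  (forall i, measurable_fun setT (fun t => w t i 0)) ->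
  (forall l i, measurable_fun setT (fun t => ws l t i 0)) ->
  (forall l, {ae P, forall t, Rspace P A w (A^T *m ws l t)}) ->
  (forall l, {ae P, forall t, A^T *m ws l t != 0}) ->
  {ae P, forall t,
    (forall l e, (0 < l)%N -> tau P A w ws t l = Some e ->
        0 <= gamma P A w ws t l < 1) /\
    (forall l e, tau P A w ws t l = Some e ->
        norm2 (xiter A b ws x0 t e.+1 - xstar - projS (Nspace P A w) (x0 - xstar)) ^+ 2
        <= (\prod_(1 <= j < l.+1) gamma P A w ws t j)
           * norm2 (projS (Rspace P A w) (x0 - xstar)) ^+ 2) /\
    (forall k l, isL P A w ws t k l ->
        norm2 (xiter A b ws x0 t k - xstar - projS (Nspace P A w) (x0 - xstar)) ^+ 2
        <= (\prod_(1 <= j < l.+1) gamma P A w ws t j)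
           * norm2 (projS (Rspace P A w) (x0 - xstar)) ^+ 2)}.
Proof.
move=> Hb _ _ HR Hnz.
have HR' := ae_foralln HR; have Hnz' := ae_foralln Hnz.
apply: filterS2 HR' Hnz' => t HRt Hnzt.
exact: det_claims.
Qed.
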